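(* Let $\kappa>0$, $b>0$, $m>7/2$, and let $n\in\mathfrak D\cap H^m(C(\pi))$ with $\|n\|_{H^m}\le C_m$. Then the matrix function $\mathcal Q$ associated with $n$ satisfies $$\|\mathcal Q(x)\|_2\le15(1+\kappa^2)\,b^{-2}(L_mC_m)^2\qquad\text{for all }x\in B(\pi),$$ where $\|\cdot\|_2$ is the spectral norm on $\mathbb C^{6\times6}$.
   Context: $B(r)$ is the open ball of radius $r$ about $0$ in $\mathbb R^3$, $C(\pi)=(-\pi,\pi)^3$. For a fixed $\alpha_0\in(0,1)$, $\mathfrak D:=\{n\in C^{1,\alpha_0}(\mathbb R^3;\mathbb C):\ \mathrm{supp}(1-n)\subset B(\pi),\ \mathrm{Re}(n)\ge b,\ \mathrm{Im}(n)\ge0\}$. For $f$ on $C(\pi)$, $\hat f(\gamma)=(2\pi)^{-3/2}\int_{C(\pi)}f(x)e^{-i\gamma\cdot x}dx$ and $\|f\|^2_{H^m}:=\sum_{\gamma\in\mathbb Z^3}(1+|\gamma|^2)^m|\hat f(\gamma)|^2$. $L_m$ is a constant with $L_m\|f\|_{H^m(C(\pi))}\ge\max_{|\alpha|\le2}\sup_{x\in C(\pi)}|\partial^\alpha f(x)|$ for all $f\in H^m(C(\pi))$. The matrix $\mathcal Q(x)\in\mathbb C^{6\times6}$ is $$\mathcal Q=\kappa^2(1-n)1_6+\frac{i\kappa}{\sqrt n}\begin{pmatrix}0_3&-(\nabla n\times)\\(\nabla n\times)&0_3\end{pmatrix}+\begin{pmatrix}-D\big(\frac{\nabla n}{n}\big)+(n^{-1/2}\Delta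 n^{1/2})1_3&0_3\\0_3&0_3\end{pmatrix},$$ where $1_k,0_k$ are the $k\times k$ identity and zero matrices, $n^{1/2}$ is the principal square root, $D(V)$ is the Jacobian matrix of a vector field $V$, and $(\nabla n\times)$ is the matrix $\begin{pmatrix}0&-\partial_zn&\partial_yn\\\partial_zn&0&-\partial_xn\\-\partial_yn&\partial_xn&0\end{pmatrix}$. *)

(* Defs.v *)
From Stdlib Require Import Reals.
From Coquelicot Require Import Coquelicot.
Open Scope R_scope.

Definition R3 : Type := (R * R * R)%type.

Definition coord (i : nat) (p : R3) : R :=
  match i, p with
  | 0%nat, (x, _, _) => x
  | 1%nat, (_, y, _) => y
  | _, (_, _, z) => z
  end.

Definition set_coord (i : nat) (p : R3) (t : R) : R3 :=
  match i, p with
  | 0%nat, (_, y, z) => (t, y, z)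
  | 1%nat, (x, _, z) => (x, t, z)
  | _, (x, y, _) => (x, y, t)
  end.

Definition dot3 (p q : R3) : R :=
  coord 0 p * coord 0 q + coord 1 p * coord 1 q + coord 2 p * coord 2 q.

Definition norm3 (p : R3) : R := sqrt (dot3 p p).

Definition dist3 (p q : R3) : R :=
  sqrt ((coord 0 p - coord 0 q) ^ 2 + (coord 1 p - coord 1 q) ^ 2
        + (coord 2 p - coord 2 q) ^ 2).

(* B(r): open ball of radius r about 0;  C(pi) = (-pi,pi)^3 *)
Definition in_ball (r : R) (p : R3) : Prop := norm3 p < r.
Definition in_cube (p : R3) : Prop :=
  forall i, (i < 3)%nat -> - PI < coord i p < PI.

Definition pdR (i : nat) (g : R3 -> R) (p : R3) : R :=
  Derive (fun t => g (set_coord i p t)) (coord i p).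
Definition ex_pdR (i : nat) (g : R3 -> R) (p : R3) : Prop :=
  ex_derive (fun t => g (set_coord i p t)) (coord i p).

Definition pd (i : nat) (f : R3 -> C) (p : R3) : C :=
  (pdR i (fun q => Re (f q)) p, pdR i (fun q => Im (f q)) p).
Definition ex_pd (i : nat) (f : R3 -> C) (p : R3) : Prop :=
  ex_pdR i (fun q => Re (f q)) p /\ ex_pdR i (fun q => Im (f q)) p.

Definition csqrt (z : C) : C :=
  (sqrt ((Cmod z + Re z) / 2),
   (if Rlt_dec (Im z) 0 then -1 else 1) * sqrt ((Cmod z - Re z) / 2)).

Definition in_supp (g : R3 -> C) (p : R3) : Prop :=
  forall eps, 0 < eps -> exists q, dist3 p q < eps /\ g q <> 0%C.

Definition C1alpha (a : R) (f : R3 -> C) : Prop :=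
  (forall p, continuous f p) /\
  (forall i p, (i < 3)%nat -> ex_pd i f p) /\
  (forall i p, (i < 3)%nat -> continuous (pd i f) p) /\
  (forall i, (i < 3)%nat -> exists K, forall p q, p <> q ->
      Cmod (pd i f p - pd i f q) <= K * Rpower (dist3 p q) a).

Definition in_D (a0 b : R) (n : R3 -> C) : Prop :=
  C1alpha a0 n /\
  (forall p, in_supp (fun q => 1 - n q)%C p -> in_ball PI p) /\
  (forall p, b <= Re (n p)) /\
  (forall p, 0 <= Im (n p)).

Definition int_cube (h : R3 -> R) : R :=
  RInt (fun x => RInt (fun y => RInt (fun z => h (x, y, z)) (- PI) PI)
                      (- PI) PI) (- PI) PI.

Definition zpt (g : Z * Z * Z) : R3 :=
  match g with (a, b, c) => (IZR a, IZR b, IZR c) end.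

Definition fourier (f : R3 -> C) (g : Z * Z * Z) : C :=
  let k := / Rpower (2 * PI) (3 / 2) in
  let e := fun x : R3 => (cos (dot3 (zpt g) x), - sin (dot3 (zpt g) x))%R in
  (k * int_cube (fun x => Re (f x * e x)%C),
   k * int_cube (fun x => Im (f x * e x)%C)).

(* ||f||_{H^m}^2 = sum_{g in Z^3} (1+|g|^2)^m |fhat g|^2  (nonnegative
   terms: supremum of the partial sums over the boxes [-N,N]^3) *)
Definition Hm_term (m : R) (f : R3 -> C) (g : Z * Z * Z) : R :=
  Rpower (1 + dot3 (zpt g) (zpt g)) m * (Cmod (fourier f g)) ^ 2.

Definition box_sum (m : R) (f : R3 -> C) (N : nat) : R :=
  sum_f_R0 (fun a => sum_f_R0 (fun b => sum_f_R0 (fun c =>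
     Hm_term m f ((Z.of_nat a - Z.of_nat N)%Z,
                  (Z.of_nat b - Z.of_nat N)%Z,
                  (Z.of_nat c - Z.of_nat N)%Z)) (2 * N)) (2 * N)) (2 * N).

Definition Hm_norm_sq (m : R) (f : R3 -> C) : Rbar :=
  Lub_Rbar (fun s => exists N, s = box_sum m f N).

Definition Hm_norm (m : R) (f : R3 -> C) : Rbar :=
  match Hm_norm_sq m f with
  | Finite r => Finite (sqrt r)
  | p_infty => p_infty
  | m_infty => m_infty
  end.

(* L is an admissible embedding constant:
   L ||f||_{H^m} >= max_{|alpha|<=2} sup_{C(pi)} |d^alpha f|
   for all f in H^m(C(pi)) (taken as continuous representatives; the
   derivatives up to order 2 are asserted to exist classically). *)
Definition embedding_const (m L : R) : Prop :=
  forall f : R3 -> C,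
    (forall p, continuous f p) ->
    is_finite (Hm_norm m f) ->
    forall p, in_cube p ->
      Cmod (f p) <= L * real (Hm_norm m f) /\
      forall i, (i < 3)%nat ->
        ex_pd i f p /\ Cmod (pd i f p) <= L * real (Hm_norm m f) /\
        forall j, (j < 3)%nat ->
          ex_pd j (pd i f) p /\ Cmod (pd j (pd i f) p) <= L * real (Hm_norm m f).

(* 6x6 complex matrices / vectors indexed by nat (indices 0..5) *)
Definition cmat := nat -> nat -> C.
Definition cvec := nat -> C.

Definition csum6 (h : nat -> C) : C :=
  (h 0%nat + h 1%nat + h 2%nat + h 3%nat + h 4%nat + h 5%nat)%C.

Definition mxapply (A : cmat) (v : cvec) : cvec := fun i => csum6 (fun j => (A i j * v j)%C).

Definition vnorm (v : cvec) : R := sqrt (sum_f_R0 (fun i => (Cmod (v i)) ^ 2) 5).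

Definition spec_norm (A : cmat) : Rbar :=
  Lub_Rbar (fun r => exists v : cvec, vnorm v = 1 /\ r = vnorm (mxapply A v)).

Definition kron (i j : nat) : C := if Nat.eqb i j then 1%C else 0%C.

(* (grad n x) as a 3x3 matrix, indices 0..2 *)
Definition crossmx (n : R3 -> C) (x : R3) (i j : nat) : C :=
  match i, j with
  | 0%nat, 1%nat => (- pd 2 n x)%C
  | 0%nat, 2%nat => pd 1 n x
  | 1%nat, 0%nat => pd 2 n x
  | 1%nat, 2%nat => (- pd 0 n x)%C
  | 2%nat, 0%nat => (- pd 1 n x)%C
  | 2%nat, 1%nat => pd 0 n x
  | _, _ => 0%C
  end.

Definition jac_gradn_over_n (n : R3 -> C) (x : R3) (i j : nat) : C :=
  pd j (fun p => (pd i n p / n p)%C) x.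

Definition lap_sqrtn (n : R3 -> C) (x : R3) : C :=
  let s := fun p => csqrt (n p) in
  (pd 0 (pd 0 s) x + pd 1 (pd 1 s) x + pd 2 (pd 2 s) x)%C.

Definition Qmat (kappa : R) (n : R3 -> C) (x : R3) : cmat :=
  fun a b =>
    let diag := ((RtoC (kappa ^ 2)) * (1 - n x) * kron a b)%C in
    let coef := ((0, kappa) / csqrt (n x))%C in
    if Nat.ltb a 3 then
      if Nat.ltb b 3 then
        (diag - jac_gradn_over_n n x a b
              + (/ csqrt (n x)) * lap_sqrtn n x * kron a b)%C
      else (coef * (- crossmx n x a (b - 3)))%C
    else
      if Nat.ltb b 3 then (coef * crossmx n x (a - 3) b)%C
      else diag.

(* Main.v *)
Require Import Defs.
From Stdlib Require Import Reals Lra Lia Classical.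
From Coquelicot Require Import Coquelicot.
Open Scope R_scope.

Lemma isd_eq (f : R -> R) x l l' : is_derive f x l -> l = l' -> is_derive f x l'.
Proof. intros; subst; auto. Qed.

Lemma isd_mult (f g : R -> R) x df dg : is_derive f x df -> is_derive g x dg ->
  is_derive (fun t => f t * g t) x (df * g x + f x * dg).
Proof. intros. exact (is_derive_mult f g x df dg H H0 Rmult_comm). Qed.

Lemma isd_minus (f g : R -> R) x df dg : is_derive f x df -> is_derive g x dg ->
  is_derive (fun t => f t - g t) x (df - dg).
Proof. intros. exact (is_derive_minus f g x df dg H H0). Qed.

Lemma isd_plus (f g : R -> R) x df dg : is_derive f x df -> is_derive g x dg ->
  is_derive (fun t => f t + g t) x (df + dg).
Proof. intros. exact (is_derive_plus f g x df dg H H0). Qed.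

Definition cder (f : R -> C) (t : R) (d : C) : Prop :=
  is_derive (fun s => fst (f s)) t (fst d) /\ is_derive (fun s => snd (f s)) t (snd d).

Lemma cder_unique (f : R -> C) t d1 d2 : cder f t d1 -> cder f t d2 -> d1 = d2.
Proof.
  intros [H1 H2] [H3 H4].
  apply is_derive_unique in H1. apply is_derive_unique in H2.
  apply is_derive_unique in H3. apply is_derive_unique in H4.
  destruct d1, d2; simpl in *; congruence.
Qed.

Lemma cder_ext (f g : R -> C) t d : (forall s, f s = g s) -> cder f t d -> cder g t d.
Proof.
  intros E [H1 H2]; split.
  - eapply is_derive_ext; [|exact H1]. intros; simpl; rewrite E; auto.
  - eapply is_derive_ext; [|exact H2]. intros; simpl; rewrite E; auto.
Qed.

Lemma cder_const (c : C) t : cder (fun _ => c) t 0%C.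
Proof. split; simpl; apply (is_derive_const (fst c) t) || apply (is_derive_const (snd c) t). Qed.

Lemma cder_mult (f g : R -> C) t df dg : cder f t df -> cder g t dg ->
  cder (fun s => (f s * g s)%C) t (df * g t + f t * dg)%C.
Proof.
  intros [F1 F2] [G1 G2]; split.
  - eapply is_derive_ext with (f := fun s => fst (f s) * fst (g s) - snd (f s) * snd (g s)).
    { intros; destruct (f t0), (g t0); reflexivity. }
    eapply isd_eq. apply isd_minus; apply isd_mult; eauto.
    destruct df, dg, (f t), (g t); simpl; ring.
  - eapply is_derive_ext with (f := fun s => fst (f s) * snd (g s) + snd (f s) * fst (g s)).
    { intros; destruct (f t0), (g t0); reflexivity. }
    eapply isd_eq. apply isd_plus; apply isd_mult; eauto.
    destruct df, dg, (f t), (g t); simpl; ring.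
Qed.

Definition cex (f : R -> C) t := ex_derive (fun s => fst (f s)) t /\ ex_derive (fun s => snd (f s)) t.

Lemma cex_cder (f : R -> C) t : cex f t -> exists d, cder f t d.
Proof.
  intros [H1 H2]. exists (Derive (fun s => fst (f s)) t, Derive (fun s => snd (f s)) t).
  split; simpl; apply Derive_correct; auto.
Qed.

Lemma cder_cex (f : R -> C) t d : cder f t d -> cex f t.
Proof. intros [H1 H2]; split; eexists; eauto. Qed.

Lemma cmod_pos_ne (z : C) : z <> 0%C -> 0 < fst z ^ 2 + snd z ^ 2.
Proof.
  intros Hz. destruct z as [a b]; simpl.
  destruct (Req_dec a 0); destruct (Req_dec b 0).
  - subst; exfalso; apply Hz; reflexivity.
  - assert (0 < b^2) by (apply pow2_gt_0; auto). nra.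
  - assert (0 < a^2) by (apply pow2_gt_0; auto). nra.
  - assert (0 < b^2) by (apply pow2_gt_0; auto). nra.
Qed.

Lemma cder_inv (f : R -> C) t df : (forall s, f s <> 0%C) -> cder f t df ->
  cder (fun s => / f s)%C t (- df / (f t * f t))%C.
Proof.
  intros Hnz Hd.
  destruct (cder_cex _ _ _ Hd) as [E1 E2].
  assert (Hp := cmod_pos_ne _ (Hnz t)).
  assert (Hden : ex_derive (fun s => fst (f s) ^ 2 + snd (f s) ^ 2) t).
  { apply (ex_derive_plus (fun s => fst (f s) ^ 2) (fun s => snd (f s) ^ 2));
    apply ex_derive_pow; auto. }
  destruct (cex_cder (fun s => / f s)%C t) as [d Hd2].
  { split.
    - eapply ex_derive_ext with (f := fun s => fst (f s) / (fst (f s) ^ 2 + snd (f s) ^ 2)).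
      { intros; reflexivity. }
      apply ex_derive_div; auto. lra.
    - eapply ex_derive_ext with (f := fun s => - snd (f s) / (fst (f s) ^ 2 + snd (f s) ^ 2)).
      { intros; reflexivity. }
      apply ex_derive_div; auto. 2: lra.
      apply (ex_derive_opp (fun s => snd (f s))); auto. }
  assert (Hm := cder_mult _ _ _ _ _ Hd2 Hd).
  assert (Hc : cder (fun s => (/ f s * f s)%C) t 0%C).
  { eapply cder_ext; [|apply (cder_const 1%C)]. intros; simpl. field. apply Hnz. }
  assert (U := cder_unique _ _ _ _ Hm Hc).
  replace (- df / (f t * f t))%C with d; auto.
  assert (Ht := Hnz t).
  assert (Hd3 : (d = ((d * f t + / f t * df) - / f t * df) / f t)%C) by (field; auto).
  rewrite Hd3, U. field. auto.
Qed.

Definition sqa (z : C) : R := sqrt ((Cmod z + fst z) / 2).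

Lemma Cmod_sq (z : C) : Cmod z * Cmod z = fst z ^ 2 + snd z ^ 2.
Proof. unfold Cmod. apply sqrt_sqrt. destruct z; simpl; nra. Qed.

Lemma Cmod_ge_fst (z : C) : fst z <= Cmod z.
Proof.
  assert (H := Cmod_sq z). assert (H0 := Cmod_ge_0 z).
  destruct z as [a b]; simpl in *. nra.
Qed.

Lemma sqa_pos (z : C) : 0 < fst z -> 0 < sqa z.
Proof. intros. unfold sqa. apply sqrt_lt_R0. assert (H0 := Cmod_ge_0 z). lra. Qed.

Lemma sqa_sq (z : C) : 0 < fst z -> sqa z * sqa z = (Cmod z + fst z) / 2.
Proof. intros. unfold sqa. apply sqrt_sqrt. assert (H0 := Cmod_ge_0 z). lra. Qed.

Lemma csqrt_alt (z : C) : 0 < fst z -> csqrt z = (sqa z, snd z / (2 * sqa z)).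
Proof.
  intros Hx. unfold csqrt, Re, Im. fold (sqa z).
  assert (Ha := sqa_pos z Hx). assert (Ha2 := sqa_sq z Hx).
  assert (Hc := Cmod_sq z). assert (Hc0 := Cmod_ge_0 z).
  set (w := snd z / (2 * sqa z)).
  assert (Hw : (Cmod z - fst z) / 2 = w * w).
  { unfold w. destruct z as [x y]; simpl in *.
    set (c := Cmod (x, y)) in *. set (a := sqa (x, y)) in *.
    field_simplify; [|lra]. assert (a*a*a*a*4 = (c+x)*(c+x)) by nra.
    apply Rmult_eq_reg_r with (4 * (a*a)); [|nra].
    field_simplify; [|lra]. nra. }
  f_equal. rewrite Hw. change (w * w) with (Rsqr w). rewrite sqrt_Rsqr_abs.
  unfold w. destruct (Rlt_dec (snd z) 0).
  - rewrite Rabs_left. lra. apply Rdiv_neg_pos; lra.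
  - rewrite Rabs_right. lra. apply Rle_ge. apply Rdiv_le_0_compat; lra.
Qed.

Lemma csqrt_sq (z : C) : 0 < fst z -> (csqrt z * csqrt z = z)%C.
Proof.
  intros Hx. rewrite csqrt_alt; auto.
  assert (Ha := sqa_pos z Hx). assert (Ha2 := sqa_sq z Hx).
  assert (Hc := Cmod_sq z).
  destruct z as [x y]; simpl in *.
  set (c := Cmod (x, y)) in *. set (a := sqa (x, y)) in *.
  unfold Cmult; simpl. f_equal.
  - apply Rmult_eq_reg_r with (4 * (a*a)); [|nra].
    field_simplify; [|lra]. nra.
  - field. lra.
Qed.

Lemma exd_sqrt (g : R -> R) t : ex_derive g t -> 0 < g t -> ex_derive (fun s => sqrt (g s)) t.
Proof. intros [d H] Hp. eexists. apply is_derive_sqrt; eauto. Qed.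

Lemma cder_csqrt (f : R -> C) t df : (forall s, 0 < fst (f s)) -> cder f t df ->
  cder (fun s => csqrt (f s)) t (df / (RtoC 2 * csqrt (f t)))%C.
Proof.
  intros Hpos Hd.
  destruct (cder_cex _ _ _ Hd) as [E1 E2].
  assert (Ecm : ex_derive (fun s => Cmod (f s)) t).
  { unfold Cmod. apply exd_sqrt.
    apply (ex_derive_plus (fun s => fst (f s) ^ 2) (fun s => snd (f s) ^ 2));
    apply ex_derive_pow; auto.
    assert (H := Hpos t). assert (0 < fst (f t) ^ 2) by (apply pow2_gt_0; lra).
    assert (0 <= snd (f t) ^ 2) by (apply pow2_ge_0). lra. }
  assert (Ea : ex_derive (fun s => sqa (f s)) t).
  { unfold sqa. apply exd_sqrt.
    apply ex_derive_scal with (k := / 2) (f := fun s => Cmod (f s) + fst (f s)) ||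
    (eapply ex_derive_ext with (f := fun s => (Cmod (f s) + fst (f s)) * / 2);
      [intros; reflexivity|]; apply ex_derive_mult;
      [apply (ex_derive_plus (fun s => Cmod (f s)) (fun s => fst (f s))); auto
      |apply ex_derive_const]).
    assert (H := Hpos t). assert (H0 := Cmod_ge_0 (f t)). lra. }
  destruct (cex_cder (fun s => csqrt (f s)) t) as [d Hd2].
  { split.
    - eapply ex_derive_ext with (f := fun s => sqa (f s)).
      { intros; rewrite csqrt_alt; auto. }
      auto.
    - eapply ex_derive_ext with (f := fun s => snd (f s) / (2 * sqa (f s))).
      { intros; rewrite csqrt_alt; auto. }
      apply ex_derive_div; auto.
      + apply ex_derive_mult; auto. apply ex_derive_const.
      + assert (H := sqa_pos _ (Hpos t)). lra. }
  assert (Hm := cder_mult _ _ _ _ _ Hd2 Hd2).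
  assert (Hc : cder (fun s => (csqrt (f s) * csqrt (f s))%C) t df).
  { eapply cder_ext; [|exact Hd]. intros; simpl. rewrite csqrt_sq; auto. }
  assert (U := cder_unique _ _ _ _ Hm Hc).
  assert (Hnz : csqrt (f t) <> 0%C).
  { rewrite csqrt_alt; auto. intro E. injection E. intros Hq1 Hq2.
    assert (Hq := sqa_pos _ (Hpos t)). lra. }
  simpl in U. rewrite <- U.
  replace ((d * csqrt (f t) + csqrt (f t) * d) / (RtoC 2 * csqrt (f t)))%C with d; auto.
  field. auto.
Qed.

Lemma set_coord_coord i p : set_coord i p (coord i p) = p.
Proof. destruct p as [[x y] z]; destruct i as [|[|i]]; reflexivity. Qed.

Lemma pd_cder i (g : R3 -> C) p d :
  cder (fun t => g (set_coord i p t)) (coord i p) d -> pd i g p = d.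
Proof.
  intros [H1 H2]. apply is_derive_unique in H1. apply is_derive_unique in H2.
  unfold pd, pdR, Re, Im. cbv beta. destruct d as [d1 d2]. simpl in H1, H2. f_equal; [exact H1|exact H2].
Qed.

Lemma ex_pd_cder i (g : R3 -> C) p : ex_pd i g p ->
  cder (fun t => g (set_coord i p t)) (coord i p) (pd i g p).
Proof.
  intros [H1 H2]. unfold pd, pdR, ex_pdR, Re, Im in *. split; simpl; apply Derive_correct; auto.
Qed.

Lemma fst_nz (z : C) : 0 < fst z -> z <> 0%C.
Proof. intros H E; subst; simpl in H; lra. Qed.

Lemma csqrt_fst (z : C) : 0 < fst z -> 0 < fst (csqrt z).
Proof. intros. rewrite csqrt_alt; auto. simpl. apply sqa_pos; auto. Qed.

Lemma two_csqrt_fst (z : C) : 0 < fst z -> 0 < fst (RtoC 2 * csqrt z)%C.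
Proof. intros. assert (H0 := csqrt_fst z H). destruct (csqrt z); simpl in *. lra. Qed.

Lemma jac_val (n : R3 -> C) x i j : (forall p, n p <> 0%C) -> ex_pd j n x -> ex_pd j (pd i n) x ->
  jac_gradn_over_n n x i j = (pd j (pd i n) x * / n x + pd i n x * (- pd j n x / (n x * n x)))%C.
Proof.
  intros Hnz H1 H2. unfold jac_gradn_over_n. apply pd_cder.
  assert (A1 := ex_pd_cder _ _ _ H1). assert (A2 := ex_pd_cder _ _ _ H2).
  assert (A3 := cder_inv _ _ _ (fun s => Hnz (set_coord j x s)) A1).
  assert (A4 := cder_mult _ _ _ _ _ A2 A3).
  cbv beta in A4. rewrite ?set_coord_coord in A4. exact A4.
Qed.

Lemma pds_val (n : R3 -> C) q j : (forall p, 0 < fst (n p)) -> ex_pd j n q ->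
  pd j (fun p => csqrt (n p)) q = (pd j n q / (RtoC 2 * csqrt (n q)))%C.
Proof.
  intros Hp H1. apply pd_cder.
  assert (A1 := ex_pd_cder _ _ _ H1).
  assert (A2 := cder_csqrt _ _ _ (fun s => Hp (set_coord j q s)) A1).
  cbv beta in A2. rewrite ?set_coord_coord in A2. exact A2.
Qed.

Lemma pdds_val (n : R3 -> C) x j : (forall p, 0 < fst (n p)) -> (forall q, ex_pd j n q) ->
  ex_pd j (pd j n) x ->
  (/ csqrt (n x) * pd j (pd j (fun p => csqrt (n p))) x =
   pd j (pd j n) x / (RtoC 2 * n x) - pd j n x * pd j n x / (RtoC 2 * RtoC 2 * (n x * n x)))%C.
Proof.
  intros Hp Hall H2.
  assert (Hv : pd j (pd j (fun p => csqrt (n p))) x =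
     (pd j (pd j n) x * / (RtoC 2 * csqrt (n x)) + pd j n x *
       (- (0 * csqrt (n x) + RtoC 2 * (pd j n x / (RtoC 2 * csqrt (n x))))
        / ((RtoC 2 * csqrt (n x)) * (RtoC 2 * csqrt (n x)))))%C).
  { apply pd_cder.
    assert (A1 := ex_pd_cder _ _ _ (Hall x)).
    assert (A2 := ex_pd_cder _ _ _ H2).
    assert (A3 := cder_csqrt _ _ _ (fun s => Hp (set_coord j x s)) A1).
    assert (A4 := cder_mult _ _ _ _ _ (cder_const (RtoC 2) (coord j x)) A3).
    assert (A5 := cder_inv _ _ _ (fun s => fst_nz _ (two_csqrt_fst _ (Hp (set_coord j x s)))) A4).
    assert (A6 := cder_mult _ _ _ _ _ A2 A5).
    cbv beta in A6. rewrite ?set_coord_coord in A6.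
    eapply cder_ext; [|exact A6]. intros s. simpl.
    rewrite pds_val; auto. }
  assert (Hs := fst_nz _ (csqrt_fst _ (Hp x))).
  assert (Hsq := csqrt_sq (n x) (Hp x)).
  rewrite Hv. set (s0 := csqrt (n x)) in *. rewrite <- Hsq.
  field. auto.
Qed.

Lemma CS6 (x0 x1 x2 x3 x4 x5 y0 y1 y2 y3 y4 y5 : R) :
  (x0*y0 + x1*y1 + x2*y2 + x3*y3 + x4*y4 + x5*y5) ^ 2 <=
  (x0^2 + x1^2 + x2^2 + x3^2 + x4^2 + x5^2) * (y0^2 + y1^2 + y2^2 + y3^2 + y4^2 + y5^2).
Proof.
  assert (E : (x0^2 + x1^2 + x2^2 + x3^2 + x4^2 + x5^2) * (y0^2 + y1^2 + y2^2 + y3^2 + y4^2 + y5^2)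
    - (x0*y0 + x1*y1 + x2*y2 + x3*y3 + x4*y4 + x5*y5) ^ 2 =
    (x0*y1-x1*y0)^2 + (x0*y2-x2*y0)^2 + (x0*y3-x3*y0)^2 + (x0*y4-x4*y0)^2 + (x0*y5-x5*y0)^2
  + (x1*y2-x2*y1)^2 + (x1*y3-x3*y1)^2 + (x1*y4-x4*y1)^2 + (x1*y5-x5*y1)^2
  + (x2*y3-x3*y2)^2 + (x2*y4-x4*y2)^2 + (x2*y5-x5*y2)^2
  + (x3*y4-x4*y3)^2 + (x3*y5-x5*y3)^2 + (x4*y5-x5*y4)^2) by ring.
  assert (forall u, 0 <= u ^ 2) by (intros; apply pow2_ge_0).
  assert (0 <= (x0*y1-x1*y0)^2 + (x0*y2-x2*y0)^2 + (x0*y3-x3*y0)^2 + (x0*y4-x4*y0)^2 + (x0*y5-x5*y0)^2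
  + (x1*y2-x2*y1)^2 + (x1*y3-x3*y1)^2 + (x1*y4-x4*y1)^2 + (x1*y5-x5*y1)^2
  + (x2*y3-x3*y2)^2 + (x2*y4-x4*y2)^2 + (x2*y5-x5*y2)^2
  + (x3*y4-x4*y3)^2 + (x3*y5-x5*y3)^2 + (x4*y5-x5*y4)^2).
  { repeat apply Rplus_le_le_0_compat; auto. }
  lra.
Qed.

Definition rowsq (A : cmat) (i : nat) : R := sum_f_R0 (fun j => Cmod (A i j) ^ 2) 5.

Lemma row_bound (A : cmat) (v : cvec) i :
  Cmod (mxapply A v i) ^ 2 <= rowsq A i * sum_f_R0 (fun j => Cmod (v j) ^ 2) 5.
Proof.
  unfold mxapply, csum6, rowsq. simpl sum_f_R0.
  assert (Ht : Cmod (A i 0%nat * v 0%nat + A i 1%nat * v 1%nat + A i 2%nat * v 2%nat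
     + A i 3%nat * v 3%nat + A i 4%nat * v 4%nat + A i 5%nat * v 5%nat)%C <=
     Cmod (A i 0%nat) * Cmod (v 0%nat) + Cmod (A i 1%nat) * Cmod (v 1%nat)
     + Cmod (A i 2%nat) * Cmod (v 2%nat) + Cmod (A i 3%nat) * Cmod (v 3%nat)
     + Cmod (A i 4%nat) * Cmod (v 4%nat) + Cmod (A i 5%nat) * Cmod (v 5%nat)).
  { rewrite <- !Cmod_mult.
    repeat (eapply Rle_trans; [apply Cmod_triangle|]; apply Rplus_le_compat_r). lra. }
  eapply Rle_trans; [|apply CS6].
  apply pow_incr. split; auto. apply Cmod_ge_0.
Qed.

Lemma spec_bound (A : cmat) (K : R) : 0 <= K ->
  sum_f_R0 (fun i => rowsq A i) 5 <= K ^ 2 -> Rbar_le (spec_norm A) (Finite K).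
Proof.
  intros HK HS. unfold spec_norm.
  destruct (Lub_Rbar_correct (fun r => exists v : cvec, vnorm v = 1 /\ r = vnorm (mxapply A v))) as [_ Hl].
  apply Hl. intros r [v [Hv ->]]. simpl.
  unfold vnorm in *.
  assert (Hv2 : sum_f_R0 (fun j => Cmod (v j) ^ 2) 5 = 1).
  { assert (0 <= sum_f_R0 (fun j => Cmod (v j) ^ 2) 5).
    { simpl sum_f_R0. assert (forall u, 0 <= u ^ 2) by (intros; apply pow2_ge_0).
      repeat apply Rplus_le_le_0_compat; apply H. }
    rewrite <- (sqrt_sqrt _ H). rewrite Hv. ring. }
  rewrite <- (sqrt_pow2 K HK). apply sqrt_le_1_alt.
  eapply Rle_trans; [|exact HS]. simpl sum_f_R0.
  assert (B := fun i => row_bound A v i). rewrite Hv2 in B.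
  assert (B0 := B 0%nat). assert (B1 := B 1%nat). assert (B2 := B 2%nat).
  assert (B3 := B 3%nat). assert (B4 := B 4%nat). assert (B5 := B 5%nat).
  lra.
Qed.

Lemma div_le (a M c b : R) : 0 <= M -> a <= M -> 0 < b -> b <= c -> a / c <= M / b.
Proof.
  intros. apply Rle_trans with (M / c).
  - apply Rmult_le_compat_r; auto. left; apply Rinv_0_lt_compat; lra.
  - apply Rmult_le_compat_l; auto. apply Rinv_le_contravar; lra.
Qed.

Lemma numeric (k M b : R) : 0 < b -> b <= 1 -> 1 <= M -> 0 < k ->
  9 * (k^2 * (1 + M) + (M / b + M * M / (b * b)) + 3 * (M / (2 * b) + M * M / (2 * 2 * (b * b)))) ^ 2
  + 18 * (k ^ 2 * M ^ 2 / b) + 9 * (k ^ 2 * (1 + M)) ^ 2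
  <= (15 * (1 + k ^ 2) * (M * M / (b * b))) ^ 2.
Proof.
  intros Hb Hb1 HM Hk.
  set (u := M / b).
  assert (Hu : M <= u). { unfold u. apply Rmult_le_reg_r with b; auto. field_simplify; nra. }
  assert (E1 : M * M / (b * b) = u * u) by (unfold u; field; lra).
  assert (E2 : M / (2 * b) = u / 2) by (unfold u; field; lra).
  assert (E3 : M * M / (2 * 2 * (b * b)) = u * u / 4) by (unfold u; field; lra).
  assert (E4 : k ^ 2 * M ^ 2 / b = k ^ 2 * (M * u)) by (unfold u; field; lra).
  rewrite E1, E2, E3, E4. fold u.
  assert (Hu1 : 1 <= u) by lra.
  set (w := u * u).
  assert (Hw : u <= w). { unfold w. pose proof (Rmult_le_compat_l u 1 u ltac:(lra) Hu1). lra. }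
  assert (HMw : 1 + M <= 2 * w) by lra.
  assert (HMu : M * u <= w * w) by (apply Rmult_le_compat; lra).
  set (K := k ^ 2). assert (HK : 0 < K) by (unfold K; nra).
  assert (A1 : 0 <= K * (1 + M) + (u + w) + 3 * (u / 2 + w / 4) <= (2 * K + 17/4) * w) by nra.
  assert (A2 : 0 <= K * (1 + M) <= 2 * K * w) by nra.
  assert (A3 : (K * (1 + M) + (u + w) + 3 * (u / 2 + w / 4)) ^ 2 <= ((2 * K + 17/4) * w) ^ 2).
  { apply pow_incr; lra. }
  assert (A4 : (K * (1 + M)) ^ 2 <= (2 * K * w) ^ 2) by (apply pow_incr; lra).
  assert (A5 : K * (M * u) <= K * (w * w)) by (apply Rmult_le_compat_l; lra).
  assert (Hw1 : 1 <= w) by lra.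
  assert (9 * ((2 * K + 17 / 4) * w) ^ 2 + 18 * (K * (w * w)) + 9 * (2 * K * w) ^ 2 <=
          (15 * (1 + K) * w) ^ 2).
  { assert (0 < w * w) by nra.
    replace (9 * ((2 * K + 17 / 4) * w) ^ 2 + 18 * (K * (w * w)) + 9 * (2 * K * w) ^ 2)
      with ((9 * (2 * K + 17 / 4) ^ 2 + 18 * K + 36 * K ^ 2) * (w * w)) by ring.
    replace ((15 * (1 + K) * w) ^ 2) with (225 * (1 + K) ^ 2 * (w * w)) by ring.
    apply Rmult_le_compat_r; nra. }
  lra.
Qed.

Lemma ball_cube (x : R3) : in_ball PI x -> in_cube x.
Proof.
  unfold in_ball, norm3, dot3, in_cube. intros H i Hi.
  destruct x as [[x0 x1] x2]; simpl in H.
  assert (HP : 0 < PI) by apply PI_RGT_0.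
  assert (Hs : forall c, c * c <= x0 * x0 + x1 * x1 + x2 * x2 -> -PI < c < PI).
  { intros c Hc. split; apply Rnot_le_lt; intro Hc2;
    (assert (PI * PI <= x0 * x0 + x1 * x1 + x2 * x2) by nra);
    assert (sqrt (PI * PI) <= sqrt (x0 * x0 + x1 * x1 + x2 * x2)) by (apply sqrt_le_1_alt; auto);
    rewrite sqrt_square in * by lra; lra. }
  destruct i as [|[|[|i]]]; simpl; apply Hs; nra.
Qed.

Lemma kron_le a b : Cmod (kron a b) <= 1.
Proof. unfold kron. destruct (Nat.eqb a b); [rewrite Cmod_1|rewrite Cmod_0]; lra. Qed.

Lemma cross_le (n : R3 -> C) x M : 0 <= M ->
  (forall i, (i < 3)%nat -> Cmod (pd i n x) <= M) -> forall i j, Cmod (crossmx n x i j) <= M.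
Proof.
  intros HM H i j.
  assert (H0 := H 0%nat ltac:(lia)). assert (H1 := H 1%nat ltac:(lia)). assert (H2 := H 2%nat ltac:(lia)).
  destruct i as [|[|[|i]]]; destruct j as [|[|[|j]]]; simpl crossmx;
    rewrite ?Cmod_opp; rewrite ?Cmod_0; auto.
Qed.


Lemma Cmod_2 : Cmod (RtoC 2) = 2.
Proof. rewrite Cmod_R. apply Rabs_pos_eq. lra. Qed.

Lemma Cmod_pos_nz (z : C) (b : R) : 0 < b -> b <= Cmod z -> z <> 0%C.
Proof. intros H1 H2 E. subst. rewrite Cmod_0 in H2. lra. Qed.

Lemma bound_jac (h g g' nx : C) M b : 0 < b -> b <= Cmod nx -> 0 <= M ->
  Cmod h <= M -> Cmod g <= M -> Cmod g' <= M ->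
  Cmod (h * / nx + g * (- g' / (nx * nx)))%C <= M / b + M * M / (b * b).
Proof.
  intros Hb Hn HM H1 H2 H3.
  assert (Hz := Cmod_pos_nz nx b Hb Hn).
  assert (Hzz : (nx * nx)%C <> 0%C).
  { apply (Cmod_pos_nz _ (b * b)). nra. rewrite Cmod_mult. apply Rmult_le_compat; lra. }
  eapply Rle_trans; [apply Cmod_triangle|].
  unfold Cdiv. rewrite !Cmod_mult, Cmod_opp, !Cmod_inv by auto. rewrite Cmod_mult.
  apply Rplus_le_compat.
  - apply (div_le (Cmod h) M (Cmod nx) b); auto.
  - replace (Cmod g * (Cmod g' * / (Cmod nx * Cmod nx))) with ((Cmod g * Cmod g') / (Cmod nx * Cmod nx))
      by (unfold Rdiv; ring).
    apply div_le; try nra; try (apply Rmult_le_compat; auto using Cmod_ge_0; lra).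
Qed.

Lemma bound_lap (h g nx : C) M b : 0 < b -> b <= Cmod nx -> 0 <= M ->
  Cmod h <= M -> Cmod g <= M ->
  Cmod (h / (RtoC 2 * nx) - g * g / (RtoC 2 * RtoC 2 * (nx * nx)))%C
    <= M / (2 * b) + M * M / (2 * 2 * (b * b)).
Proof.
  intros Hb Hn HM H1 H2.
  assert (Hz := Cmod_pos_nz nx b Hb Hn).
  assert (H2z : (RtoC 2 * nx)%C <> 0%C).
  { apply (Cmod_pos_nz _ (2 * b)). lra. rewrite Cmod_mult, Cmod_2. lra. }
  assert (H4z : (RtoC 2 * RtoC 2 * (nx * nx))%C <> 0%C).
  { apply (Cmod_pos_nz _ (2 * 2 * (b * b))). nra. rewrite !Cmod_mult, Cmod_2.
    apply Rmult_le_compat_l. lra. apply Rmult_le_compat; lra. }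
  unfold Cminus. eapply Rle_trans; [apply Cmod_triangle|]. rewrite Cmod_opp.
  unfold Cdiv. rewrite !Cmod_mult, !Cmod_inv by auto. rewrite !Cmod_mult, Cmod_2.
  apply Rplus_le_compat.
  - apply div_le; auto; lra.
  - replace (Cmod g * Cmod g * / (2 * 2 * (Cmod nx * Cmod nx))) with
      ((Cmod g * Cmod g) / (2 * 2 * (Cmod nx * Cmod nx))) by (unfold Rdiv; ring).
    apply div_le; try nra; try (apply Rmult_le_compat; auto using Cmod_ge_0; lra);
    try (apply Rmult_le_compat_l; [lra|]; apply Rmult_le_compat; lra).
Qed.

Lemma tri3 (a b c : C) : Cmod (a - b + c)%C <= Cmod a + Cmod b + Cmod c.
Proof.
  eapply Rle_trans; [apply Cmod_triangle|]. unfold Cminus.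
  assert (H := Cmod_triangle a (- b)). rewrite Cmod_opp in H. lra.
Qed.

Lemma diag_le (k : R) (nx d : C) M : 0 < k -> Cmod nx <= M -> Cmod d <= 1 ->
  Cmod (RtoC (k ^ 2) * (1 - nx) * d)%C <= k ^ 2 * (1 + M).
Proof.
  intros Hk Hn Hd. rewrite !Cmod_mult, Cmod_R, Rabs_pos_eq by (apply pow_le; lra).
  assert (H := Cmod_triangle 1 (- nx)). rewrite Cmod_opp, Cmod_1 in H.
  assert (H0 := Cmod_ge_0 d). assert (H1 := Cmod_ge_0 (1 - nx)%C).
  assert (0 < k ^ 2) by (apply pow_lt; lra).
  unfold Cminus in H1 |- *.
  assert (Cmod (1 + - nx)%C * Cmod d <= 1 + M) by nra. nra.
Qed.

Theorem lemmaA2 (alpha0 kappa b m Cm Lm : R) (n : R3 -> C) :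
  0 < alpha0 < 1 ->
  0 < kappa -> 0 < b -> 7 / 2 < m ->
  embedding_const m Lm ->
  in_D alpha0 b n ->
  is_finite (Hm_norm m n) ->
  Rbar_le (Hm_norm m n) (Finite Cm) ->
  forall x : R3, in_ball PI x ->
    Rbar_le (spec_norm (Qmat kappa n x))
            (Finite (15 * (1 + kappa ^ 2) * / b ^ 2 * (Lm * Cm) ^ 2)).
Proof.
  intros Ha Hk Hb Hm HL HD Hfin Hle x Hx.
  destruct HD as [[Hcont [Hexpd _]] [Hsupp [HRe HIm]]].
  set (Nn := real (Hm_norm m n)).
  assert (HNn : Hm_norm m n = Finite Nn) by (unfold Nn; symmetry; exact Hfin).
  assert (HNC : Nn <= Cm) by (rewrite HNn in Hle; exact Hle).
  assert (HN0 : 0 <= Nn).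
  { unfold Nn, Hm_norm in *. destruct (Hm_norm_sq m n); simpl; try apply sqrt_pos;
    discriminate. }
  assert (Hcube := ball_cube x Hx).
  set (p0 := (3, 3, 0) : R3).
  assert (HPI3 : 3 < PI) by (assert (H := PI2_3_2); lra).
  assert (Hp0c : in_cube p0).
  { intros i Hi. destruct i as [|[|[|i]]]; simpl; try lra. }
  assert (Hp0b : ~ in_ball PI p0).
  { unfold in_ball, norm3, dot3; simpl. intro H.
    assert (sqrt (4 * 4) <= sqrt (3 * 3 + 3 * 3 + 0 * 0)) by (apply sqrt_le_1_alt; lra).
    rewrite sqrt_square in H0 by lra. assert (H1 := PI_4). lra. }
  assert (Hn1 : n p0 = 1%C).
  { destruct (classic (n p0 = 1%C)) as [E|E]; auto. exfalso. apply Hp0b. apply Hsupp.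
    intros eps Heps. exists p0. split.
    - unfold dist3. replace ((coord 0 p0 - coord 0 p0) ^ 2 + (coord 1 p0 - coord 1 p0) ^ 2
        + (coord 2 p0 - coord 2 p0) ^ 2) with 0 by ring. rewrite sqrt_0; auto.
    - intro E2. apply E. rewrite <- (Cplus_0_r (n p0)), <- E2. ring. }
  assert (Hb1 : b <= 1) by (assert (H := HRe p0); rewrite Hn1 in H; simpl in H; lra).
  destruct (HL n Hcont Hfin p0 Hp0c) as [Hp0M _].
  rewrite Hn1, Cmod_1 in Hp0M. fold Nn in Hp0M.
  set (M := Lm * Nn) in *.
  assert (HLpos : 0 <= Lm) by (destruct (Rle_lt_dec 0 Lm); auto; unfold M in Hp0M; nra).
  assert (HMP : M <= Lm * Cm) by (unfold M; apply Rmult_le_compat_l; auto).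
  destruct (HL n Hcont Hfin x Hcube) as [HnM Hder]. fold Nn M in HnM, Hder.
  assert (Hpos : forall p, 0 < fst (n p)) by (intros p; assert (H := HRe p); unfold Re in H; lra).
  assert (Hnz : forall p, n p <> 0%C) by (intros p; apply fst_nz; auto).
  set (s0 := csqrt (n x)).
  assert (Hsq : (s0 * s0 = n x)%C) by (apply csqrt_sq; auto).
  assert (Hs0 : s0 <> 0%C) by (apply fst_nz, csqrt_fst; auto).
  set (N0 := Cmod (n x)).
  assert (HN0b : b <= N0) by (assert (H := Cmod_ge_fst (n x)); assert (H1 := HRe x); unfold Re in H1; unfold N0; lra).
  assert (Hs0N : Cmod s0 * Cmod s0 = N0) by (unfold N0; rewrite <- Hsq, Cmod_mult; auto).
  assert (HM1 : 1 <= M) by lra.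
  assert (Hg : forall i, (i < 3)%nat -> Cmod (pd i n x) <= M) by (intros i Hi; apply Hder; auto).
  assert (Hh : forall i j, (i < 3)%nat -> (j < 3)%nat -> Cmod (pd j (pd i n) x) <= M)
    by (intros i j Hi Hj; apply Hder; auto).
  assert (Hexh : forall i j, (i < 3)%nat -> (j < 3)%nat -> ex_pd j (pd i n) x)
    by (intros i j Hi Hj; apply Hder; auto).
  assert (HM0 : 0 <= M) by lra.
  assert (HJ : forall i j, (i < 3)%nat -> (j < 3)%nat ->
      Cmod (jac_gradn_over_n n x i j) <= M / b + M * M / (b * b)).
  { intros i j Hi Hj. rewrite jac_val; auto.
    apply bound_jac; auto. }
  assert (HLap : Cmod (/ s0 * lap_sqrtn n x)%C <= 3 * (M / (2 * b) + M * M / (2 * 2 * (b * b)))).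
  { pose proof (pdds_val n x 0 Hpos (fun q => Hexpd 0%nat q ltac:(lia)) (Hexh 0%nat 0%nat ltac:(lia) ltac:(lia))) as P0.
    pose proof (pdds_val n x 1 Hpos (fun q => Hexpd 1%nat q ltac:(lia)) (Hexh 1%nat 1%nat ltac:(lia) ltac:(lia))) as P1.
    pose proof (pdds_val n x 2 Hpos (fun q => Hexpd 2%nat q ltac:(lia)) (Hexh 2%nat 2%nat ltac:(lia) ltac:(lia))) as P2.
    fold s0 in P0, P1, P2.
    unfold lap_sqrtn. cbv zeta.
    set (X0 := pd 0 (pd 0 (fun p => csqrt (n p))) x) in *.
    set (X1 := pd 1 (pd 1 (fun p => csqrt (n p))) x) in *.
    set (X2 := pd 2 (pd 2 (fun p => csqrt (n p))) x) in *.
    replace (/ s0 * (X0 + X1 + X2))%C with (/ s0 * X0 + / s0 * X1 + / s0 * X2)%C by ring.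
    rewrite P0, P1, P2.
    eapply Rle_trans; [apply Cmod_triangle|].
    eapply Rle_trans; [apply Rplus_le_compat_r; apply Cmod_triangle|].
    assert (B0 : forall j, (j < 3)%nat -> Cmod (pd j (pd j n) x / (RtoC 2 * n x) - pd j n x * pd j n x /
       (RtoC 2 * RtoC 2 * (n x * n x)))%C <= M / (2 * b) + M * M / (2 * 2 * (b * b))).
    { intros j Hj. apply bound_lap; auto. }
    assert (Q0 := B0 0%nat ltac:(lia)). assert (Q1 := B0 1%nat ltac:(lia)). assert (Q2 := B0 2%nat ltac:(lia)).
    lra. }
  set (E1 := kappa ^ 2 * (1 + M) + (M / b + M * M / (b * b)) + 3 * (M / (2 * b) + M * M / (2 * 2 * (b * b)))).
  set (E2 := kappa ^ 2 * M ^ 2 / b).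
  set (E3 := kappa ^ 2 * (1 + M)).
  assert (HTL : forall a c, (a < 3)%nat -> (c < 3)%nat -> Cmod (Qmat kappa n x a c) ^ 2 <= E1 ^ 2).
  { intros a c Ha3 Hc3. apply pow_incr. split; [apply Cmod_ge_0|].
    unfold Qmat. cbv zeta.
    rewrite (proj2 (Nat.ltb_lt a 3) Ha3), (proj2 (Nat.ltb_lt c 3) Hc3). fold s0.
    eapply Rle_trans; [apply tri3|]. unfold E1.
    apply Rplus_le_compat; [apply Rplus_le_compat|].
    - apply diag_le; auto using kron_le.
    - apply HJ; auto.
    - rewrite Cmod_mult. assert (H := kron_le a c). assert (H0 := Cmod_ge_0 (/ s0 * lap_sqrtn n x)%C).
      nra. }
  assert (HBR : forall a c, (3 <= a)%nat -> (3 <= c)%nat -> Cmod (Qmat kappa n x a c) ^ 2 <= E3 ^ 2).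
  { intros a c Ha3 Hc3. apply pow_incr. split; [apply Cmod_ge_0|].
    unfold Qmat. cbv zeta.
    rewrite (proj2 (Nat.ltb_ge a 3) Ha3), (proj2 (Nat.ltb_ge c 3) Hc3).
    apply diag_le; auto using kron_le. }
  assert (Hcr := cross_le n x M HM0 Hg).
  assert (Hcoef : Cmod ((0, kappa) / s0)%C ^ 2 = kappa ^ 2 / N0).
  { unfold Cdiv. rewrite Cmod_mult, Cmod_inv by auto.
    assert (Ek : Cmod (0, kappa) = kappa).
    { unfold Cmod. simpl. replace (0 * (0 * 1) + kappa * (kappa * 1)) with (kappa * kappa) by ring.
      apply sqrt_square. lra. }
    rewrite Ek. rewrite <- Hs0N. field. intro E. rewrite E in Hs0N. lra. }
  assert (Hoff : forall d, Cmod d <= M -> Cmod ((0, kappa) / s0 * d)%C ^ 2 <= E2).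
  { intros d Hd. rewrite Cmod_mult, Rpow_mult_distr, Hcoef. unfold E2.
    assert (Hd2 : Cmod d ^ 2 <= M ^ 2) by (apply pow_incr; split; auto using Cmod_ge_0).
    replace (kappa ^ 2 / N0 * Cmod d ^ 2) with (kappa ^ 2 * Cmod d ^ 2 / N0) by (field; lra).
    apply div_le; try lra.
    - apply Rmult_le_pos. apply pow_le; lra. apply pow_le; lra.
    - apply Rmult_le_compat_l; auto. apply pow_le; lra. }
  assert (HTR : forall a c, (a < 3)%nat -> (3 <= c)%nat -> Cmod (Qmat kappa n x a c) ^ 2 <= E2).
  { intros a c Ha3 Hc3.
    unfold Qmat. cbv zeta.
    rewrite (proj2 (Nat.ltb_lt a 3) Ha3), (proj2 (Nat.ltb_ge c 3) Hc3). fold s0.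
    apply Hoff. rewrite Cmod_opp. apply Hcr. }
  assert (HBL : forall a c, (3 <= a)%nat -> (c < 3)%nat -> Cmod (Qmat kappa n x a c) ^ 2 <= E2).
  { intros a c Ha3 Hc3.
    unfold Qmat. cbv zeta.
    rewrite (proj2 (Nat.ltb_ge a 3) Ha3), (proj2 (Nat.ltb_lt c 3) Hc3). fold s0.
    apply Hoff. apply Hcr. }
  assert (Hnum := numeric kappa M b Hb Hb1 HM1 Hk). fold E1 E2 E3 in Hnum.
  set (K := 15 * (1 + kappa ^ 2) * / b ^ 2 * (Lm * Cm) ^ 2).
  assert (HK : 15 * (1 + kappa ^ 2) * (M * M / (b * b)) <= K).
  { unfold K. replace (15 * (1 + kappa ^ 2) * / b ^ 2 * (Lm * Cm) ^ 2) with
      (15 * (1 + kappa ^ 2) * ((Lm * Cm) * (Lm * Cm) / (b * b))) by (field; lra).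
    apply Rmult_le_compat_l. assert (0 <= kappa ^ 2) by (apply pow_le; lra). lra.
    apply Rmult_le_compat_r. left; apply Rinv_0_lt_compat; nra.
    apply Rmult_le_compat; lra. }
  assert (HK0 : 0 <= 15 * (1 + kappa ^ 2) * (M * M / (b * b))).
  { apply Rmult_le_pos. assert (0 <= kappa ^ 2) by (apply pow_le; lra). lra.
    apply Rmult_le_pos. nra. left; apply Rinv_0_lt_compat; nra. }
  apply spec_bound. lra.
  eapply Rle_trans; [|apply pow_incr; split; [exact HK0|exact HK]].
  eapply Rle_trans; [|exact Hnum].
  unfold rowsq. simpl sum_f_R0.
  assert (T00 := HTL 0%nat 0%nat ltac:(lia) ltac:(lia)).
  assert (T01 := HTL 0%nat 1%nat ltac:(lia) ltac:(lia)).
  assert (T02 := HTL 0%nat 2%nat ltac:(lia) ltac:(lia)).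
  assert (T03 := HTR 0%nat 3%nat ltac:(lia) ltac:(lia)).
  assert (T04 := HTR 0%nat 4%nat ltac:(lia) ltac:(lia)).
  assert (T05 := HTR 0%nat 5%nat ltac:(lia) ltac:(lia)).
  assert (T10 := HTL 1%nat 0%nat ltac:(lia) ltac:(lia)).
  assert (T11 := HTL 1%nat 1%nat ltac:(lia) ltac:(lia)).
  assert (T12 := HTL 1%nat 2%nat ltac:(lia) ltac:(lia)).
  assert (T13 := HTR 1%nat 3%nat ltac:(lia) ltac:(lia)).
  assert (T14 := HTR 1%nat 4%nat ltac:(lia) ltac:(lia)).
  assert (T15 := HTR 1%nat 5%nat ltac:(lia) ltac:(lia)).
  assert (T20 := HTL 2%nat 0%nat ltac:(lia) ltac:(lia)).
  assert (T21 := HTL 2%nat 1%nat ltac:(lia) ltac:(lia)).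
  assert (T22 := HTL 2%nat 2%nat ltac:(lia) ltac:(lia)).
  assert (T23 := HTR 2%nat 3%nat ltac:(lia) ltac:(lia)).
  assert (T24 := HTR 2%nat 4%nat ltac:(lia) ltac:(lia)).
  assert (T25 := HTR 2%nat 5%nat ltac:(lia) ltac:(lia)).
  assert (T30 := HBL 3%nat 0%nat ltac:(lia) ltac:(lia)).
  assert (T31 := HBL 3%nat 1%nat ltac:(lia) ltac:(lia)).
  assert (T32 := HBL 3%nat 2%nat ltac:(lia) ltac:(lia)).
  assert (T33 := HBR 3%nat 3%nat ltac:(lia) ltac:(lia)).
  assert (T34 := HBR 3%nat 4%nat ltac:(lia) ltac:(lia)).
  assert (T35 := HBR 3%nat 5%nat ltac:(lia) ltac:(lia)).
  assert (T40 := HBL 4%nat 0%nat ltac:(lia) ltac:(lia)).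
  assert (T41 := HBL 4%nat 1%nat ltac:(lia) ltac:(lia)).
  assert (T42 := HBL 4%nat 2%nat ltac:(lia) ltac:(lia)).
  assert (T43 := HBR 4%nat 3%nat ltac:(lia) ltac:(lia)).
  assert (T44 := HBR 4%nat 4%nat ltac:(lia) ltac:(lia)).
  assert (T45 := HBR 4%nat 5%nat ltac:(lia) ltac:(lia)).
  assert (T50 := HBL 5%nat 0%nat ltac:(lia) ltac:(lia)).
  assert (T51 := HBL 5%nat 1%nat ltac:(lia) ltac:(lia)).
  assert (T52 := HBL 5%nat 2%nat ltac:(lia) ltac:(lia)).
  assert (T53 := HBR 5%nat 3%nat ltac:(lia) ltac:(lia)).
  assert (T54 := HBR 5%nat 4%nat ltac:(lia) ltac:(lia)).
  assert (T55 := HBR 5%nat 5%nat ltac:(lia) ltac:(lia)).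
  lra.
Qed.
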